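(* Let $\mathbf{u}=(u_n)$ be an a-sequence with bounded ratio sequence $(q_n)$. Write $S^*_\mathbf{u}=\{m_1<m_2<\cdots\}$ and $\delta_k=m_{k+1}-m_k$. Then: (a) if the sequence $(\delta_k)$ is unbounded, there are $\mathfrak{c}$ many elements $x\in\mathbb{T}$ with $\varrho_\mathbf{u}(x,0)=\frac{1}{q_\mathbf{u}}$; (b) if the sequence $(\delta_k)$ is bounded, then $|B^{\varrho_\mathbf{u}}_{1/q_\mathbf{u}}(0)|=\mathfrak{c}$.
   Context: An a-sequence is a strictly increasing sequence of integers $\mathbf{u}=(u_n)_{n\in\mathbb{N}}$ with $u_n\mid u_{n+1}$ for all $n$. Its ratios are $q_0=u_0$ and $q_n=u_n/u_{n-1}$ ($n>0$); $q_\mathbf{u}=\limsup_n q_n$ and $S^*_\mathbf{u}=\{m\in\mathbb{N}: q_m=q_\mathbf{u}\}$ (infinite when the ratios are bounded). $\mathbb{T}=\mathbb{R}/\mathbb{Z}$, $\|x\|$ is the distance from $x$ to the nearest integer, $d(x,y)=\|x-y\|$, $\varrho_\mathbf{u}(x,y)=\sup_n\max\{d(x,y),d(u_nx,u_ny)\}$, and $B^{\varrho_\mathbf{u}}_\varepsilon(0)=\{x\in\mathbb{T}:\varrho_\mathbf{u}(x,0)<\varepsilon\}$. $\mathfrak{c}$ denotes the cardinality of the continuum. *)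

(* Defs.v *)
From HB Require Import structures.
From mathcomp Require Import all_boot all_order all_algebra.
From mathcomp Require Import all_classical all_reals all_analysis.
Set Implicit Arguments. Unset Strict Implicit. Unset Printing Implicit Defensive.
Import Order.TTheory GRing.Theory Num.Theory.
Local Open Scope classical_set_scope.
Local Open Scope ring_scope.

(* An a-sequence: strictly increasing integers with u_n | u_{n+1}.
   (Such a sequence is automatically positive, so nat is used.) *)
Definition a_sequence (u : nat -> nat) : Prop :=
  forall n : nat, (u n < u n.+1)%N /\ (u n %| u n.+1)%N.

Definition a_ratio (u : nat -> nat) (n : nat) : nat :=
  match n with 0 => u 0 | k.+1 => (u k.+1 %/ u k)%N end.

Definition qlim (R : realType) (u : nat -> nat) : R :=
  limn_sup (fun n => ((a_ratio u n)%:R : R)).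

Definition Sstar (R : realType) (u : nat -> nat) : set nat :=
  [set m | (a_ratio u m)%:R = qlim R u].

Definition dnorm (R : realType) (x : R) : R :=
  Num.min (x - (Num.floor x)%:~R) ((Num.floor x)%:~R + 1 - x).

(* rho_u(x,0) = sup_n max{ ||x||, ||u_n x|| }; points of T = R/Z are
   represented by their representatives in [0,1). *)
Definition rho0 (R : realType) (u : nat -> nat) (x : R) : R :=
  sup [set Num.max (dnorm x) (dnorm ((u n)%:R * x)) | n in [set: nat]].

Definition torus (R : realType) : set R := [set x | 0 <= x < 1].

(* Main.v *)
Require Import Defs.
From HB Require Import structures.
From mathcomp Require Import all_boot all_order all_algebra.
From mathcomp Require Import all_classical all_reals all_analysis.
From mathcomp Require Import ring lra zify.
From mathcomp Require Import lra.
Import Order.TTheory GRing.Theory Num.Theory.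
Local Open Scope classical_set_scope.
Local Open Scope ring_scope.

Lemma dnorm_le (R : realType) (t : R) (k : int) : dnorm t <= `|t - k%:~R|.
Proof.
rewrite /dnorm; set f := Num.floor t.
have /andP[h1 h2] := floor_itv t; rewrite -/f in h1 h2.
rewrite intrD in h2.
have [kf|fk] := lerP k f.
- have : k%:~R <= f%:~R :> R by rewrite ler_int.
  move=> hk; rewrite ge_min; apply/orP; left.
  apply: le_trans (ler_norm _); lra.
- have : (f + 1)%:~R <= k%:~R :> R by rewrite ler_int; lia.
  rewrite intrD => hk; rewrite ge_min; apply/orP; right.
  rewrite distrC; apply: le_trans (ler_norm _); lra.
Qed.

Lemma dnorm_ge (R : realType) (t : R) (k : int) :
  `|t - k%:~R| <= 2^-1 -> `|t - k%:~R| <= dnorm t.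
Proof.
rewrite /dnorm; set f := Num.floor t.
have /andP[h1 h2] := floor_itv t; rewrite -/f in h1 h2.
rewrite intrD in h2.
have : (k <= f - 1 \/ k = f \/ k = f + 1 \/ f + 2 <= k)%R by lia.
rewrite ler_norml => -[hk|[->|[->|hk]]] /andP[a b].
- move: hk; rewrite -(ler_int R) intrD => hk. exfalso; lra.
- rewrite le_min; apply/andP; split; rewrite ler_norml; apply/andP; split; lra.
- rewrite le_min intrD; apply/andP; split; rewrite ler_norml; apply/andP; split; lra.
- move: hk; rewrite -(ler_int R) intrD => hk. exfalso; lra.
Qed.

Fixpoint alt {R : realType} (a : nat -> R) (M : nat) : R :=
  match M with 0%N => 0 | M'.+1 => a 0%N - alt (fun i => a i.+1) M' end.

Lemma alt_bound (R : realType) (M : nat) (c : nat -> R) :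
  (forall i, 0 <= c i) -> (forall i, c i.+1 <= c i) -> 0 <= alt c M <= c 0%N.
Proof.
elim: M c => [|M IH] c c0 cd /=; first by rewrite lexx c0.
have /andP[h1 h2] := IH (fun i => c i.+1) (fun i => c0 i.+1) (fun i => cd i.+1).
have := cd 0%N; have := c0 0%N; have := c0 1%N.
move=> *; apply/andP; split; lra.
Qed.

Lemma alt_bound2 (R : realType) (M : nat) (c : nat -> R) :
  (forall i, 0 <= c i) -> (forall i, c i.+1 <= c i) -> (2 <= M)%N ->
  c 0%N - c 1%N <= alt c M <= c 0%N - c 1%N + c 2%N.
Proof.
case: M => [|[|M]] // c0 cd _ /=.
have /andP[h1 h2] := @alt_bound R M (fun i => c i.+2) (fun i => c0 i.+2) (fun i => cd i.+2).
apply/andP; split; lra.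
Qed.

Lemma alt_split (R : realType) (N M : nat) (a : nat -> R) :
  alt a (N + M) = alt a N + (-1) ^+ N * alt (fun i => a (N + i)%N) M.
Proof.
elim: N a => [|N IH] a /=.
  by rewrite add0n expr0 mul1r add0r; congr alt; apply: funext => i; rewrite add0n.
rewrite IH exprS.
have -> : (fun i => a (N + i).+1) = (fun i => a (N.+1 + i)%N).
  by apply: funext => i; rewrite addSn.
ring.
Qed.

Lemma alt_ext (R : realType) (M : nat) (a b : nat -> R) :
  (forall i, (i < M)%N -> a i = b i) -> alt a M = alt b M.
Proof.
elim: M a b => [|M IH] a b h //=.
by rewrite h // (IH (fun i => a i.+1) (fun i => b i.+1)) // => i hi; apply: h.
Qed.

Lemma alt_scale (R : realType) (M : nat) (a : nat -> R) k :
  k * alt a M = alt (fun i => k * a i) M.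
Proof.
elim: M a => [|M IH] a /=; first by rewrite mulr0.
by rewrite mulrBr IH.
Qed.

Lemma alt_int (R : realType) (M : nat) (a : nat -> R) :
  (forall i, (i < M)%N -> exists z : int, a i = z%:~R) ->
  exists z : int, alt a M = z%:~R.
Proof.
elim: M a => [|M IH] a h /=; first by exists 0; rewrite mulr0z.
have [z1 e1] := h 0%N isT.
have [z2 e2] := IH (fun i => a i.+1) (fun i hi => h i.+1 hi).
by exists (z1 - z2); rewrite e1 e2 intrB.
Qed.

Definition altlim {R : realType} (a : nat -> R) : R :=
  sup [set alt a (2 * k)%N | k in [set: nat]].

Lemma alt_mono (R : realType) (c : nat -> R) :
  (forall i, 0 <= c i) -> (forall i, c i.+1 <= c i) ->
  forall N M, (N <= M)%N ->
  0 <= (-1) ^+ N * (alt c M - alt c N) <= c N.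
Proof.
move=> c0 cd N M hNM; rewrite -(subnKC hNM) alt_split.
rewrite addrAC subrr add0r mulrA -expr2 -exprM mulnC exprM sqrrN expr1n !expr1n mul1r.
have := @alt_bound R (M - N) (fun i => c (N + i)%N); rewrite addn0; apply=> i; [exact: c0|rewrite addnS; exact: cd].
Qed.

Arguments alt_mono {R c}.
Lemma alt_mono2 (R : realType) (c : nat -> R) :
  (forall i, 0 <= c i) -> (forall i, c i.+1 <= c i) ->
  forall N M, (N.+2 <= M)%N ->
  c N - c N.+1 <= (-1) ^+ N * (alt c M - alt c N) <= c N - c N.+1 + c N.+2.
Proof.
move=> c0 cd N M hNM; rewrite -(subnKC (ltnW (ltnW hNM))) alt_split.
rewrite addrAC subrr add0r mulrA -expr2 -exprM mulnC exprM sqrrN expr1n !expr1n mul1r.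
have h := @alt_bound2 R (M - N) (fun i => c (N + i)%N).
rewrite !addn0 !addn1 !addn2 in h; apply: h => [i|i|]; first exact: c0.
  by rewrite addnS; apply: cd.
lia.
Qed.
Arguments alt_mono2 {R c}.

Lemma sign_even (R : realType) k : (-1) ^+ (2 * k)%N = 1 :> R.
Proof. by rewrite exprM sqrrN expr1n expr1n. Qed.

Lemma sign_odd (R : realType) k : (-1) ^+ (2 * k).+1 = -1 :> R.
Proof. by rewrite exprS sign_even mulr1. Qed.

Lemma altlim_bounds (R : realType) (c : nat -> R) :
  (forall i, 0 <= c i) -> (forall i, c i.+1 <= c i) ->
  forall k, alt c (2 * k)%N <= altlim c <= alt c (2 * k).+1.
Proof.
move=> c0 cd.
have hE : forall k m, alt c (2 * k)%N <= alt c (2 * m).+1.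
  move=> k m; have [h|h] := leqP (2 * k)%N (2 * m).+1.
    have /andP[+ _] := alt_mono c0 cd _ _ h; rewrite sign_even mul1r; lra.
  have /andP[+ _] := alt_mono c0 cd _ _ (ltnW h); rewrite sign_odd; lra.
move=> k; apply/andP; split.
  apply: ub_le_sup; last by exists k.
  by exists (alt c 1); move=> y [j _ <-]; have := hE j 0%N; rewrite muln0.
apply: ge_sup; first by exists (alt c 0); exists 0%N.
by move=> y [j _ <-]; apply: hE.
Qed.

Arguments altlim_bounds {R c}.

Lemma altlim_bracket (R : realType) (c : nat -> R) :
  (forall i, 0 <= c i) -> (forall i, c i.+1 <= c i) -> forall N,
  c N - c N.+1 <= (-1) ^+ N * (altlim c - alt c N) <= c N - c N.+1 + c N.+2.
Proof.
move=> c0 cd N.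
have /andP[hA hB] := altlim_bounds c0 cd N.+1.
have /andP[a1 a2] := alt_mono2 c0 cd N (2 * N.+1)%N ltac:(lia).
have hh : (N.+2 <= (2 * N.+1).+1)%N by lia.
have /andP[b1 b2] := alt_mono2 c0 cd N _ hh.
have [e|e] : (-1) ^+ N = 1 :> R \/ (-1) ^+ N = -1 :> R.
  by rewrite -signr_odd; case: (odd N); [right; rewrite expr1|left; rewrite expr0].
all: rewrite e in a1 a2 b1 b2 *; apply/andP; split; lra.
Qed.
Arguments altlim_bracket {R c}.

Lemma u_pos u : a_sequence u -> forall n, (0 < u n)%N.
Proof.
move=> hu [|n]; last by have [h _] := hu n; apply: leq_ltn_trans h.
case: (posnP (u 0%N)) => // h0.
have [h1 h2] := hu 0%N; move: h2; rewrite h0 dvd0n => /eqP h2.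
by move: h1; rewrite h0 h2.
Qed.

Lemma u_dvd u : a_sequence u -> forall m n, (m <= n)%N -> (u m %| u n)%N.
Proof.
move=> hu m n /subnK <-; elim: (n - m)%N => [|k IH] //.
by rewrite addSn; apply: dvdn_trans IH (proj2 (hu _)).
Qed.

Lemma u_lt u : a_sequence u -> forall m n, (m < n)%N -> (u m < u n)%N.
Proof.
move=> hu m n /subnK <-; elim: (n - m.+1)%N => [|k IH]; first by rewrite add0n; case: (hu m).
by rewrite addSn; apply: ltn_trans IH (proj1 (hu _)).
Qed.

Lemma u_le u : a_sequence u -> forall m n, (m <= n)%N -> (u m <= u n)%N.
Proof.
move=> hu m n; rewrite leq_eqVlt => /orP[/eqP->//|h]; exact: ltnW (@u_lt u hu m n h).
Qed.

Lemma u_double u : a_sequence u -> forall m n, (m < n)%N -> (2 * u m <= u n)%N.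
Proof.
move=> hu m n h; have d := @u_dvd u hu m n (ltnW h); have l := @u_lt u hu m n h.
have p := @u_pos u hu m.
move: d => /dvdnP[k hk]; rewrite hk in l *.
rewrite leq_pmul2r //; case: k hk l => [|[|k]] //= _; rewrite ?mul0n ?mul1n ?ltnn //.
Qed.

Lemma u_ratio u : a_sequence u -> forall n, u n.+1 = (a_ratio u n.+1 * u n)%N.
Proof. by move=> hu n /=; rewrite divnK //; case: (hu n). Qed.

Lemma u_pow2 u : a_sequence u -> forall m d, (2 ^ d * u m <= u (m + d))%N.
Proof.
move=> hu m; elim=> [|d IH]; first by rewrite expn0 mul1n addn0.
rewrite expnS -mulnA addnS; apply: leq_trans (@u_double u hu _ _ (ltnSn _)).
by rewrite leq_pmul2l.
Qed.

Lemma u_powB u B : a_sequence u -> (forall n, (a_ratio u n <= B)%N) ->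
  forall m d, (u (m + d) <= B ^ d * u m)%N.
Proof.
move=> hu hB m; elim=> [|d IH]; first by rewrite expn0 mul1n addn0.
rewrite addnS u_ratio // expnS -mulnA; exact: leq_mul (hB _) IH.
Qed.

Lemma smono (f : nat -> nat) : (forall k, (f k < f k.+1)%N) ->
  forall i j, (i <= j)%N -> (f i + (j - i) <= f j)%N.
Proof.
move=> hf i j /subnK <-; rewrite addnK; elim: (j - i)%N => [|k IH]; first by rewrite addn0.
by rewrite addSn addnS; apply: leq_ltn_trans IH (hf _).
Qed.
Arguments u_pos {u}. Arguments u_dvd {u}. Arguments u_lt {u}. Arguments u_le {u}.
Arguments u_double {u}. Arguments u_ratio {u}. Arguments u_pow2 {u}. Arguments u_powB {u B}.

Lemma divle (R : realType) (x y x' y' : R) : 0 < y -> 0 < y' ->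
  x * y' <= x' * y -> x / y <= x' / y'.
Proof.
move=> hy hy' h; rewrite ler_pdivrMr // mulrAC ler_pdivlMr //.
Qed.

Lemma divle_nat (R : realType) (x y x' y' : nat) : (0 < y)%N -> (0 < y')%N ->
  (x * y' <= x' * y)%N -> (x%:R / y%:R : R) <= x'%:R / y'%:R.
Proof.
move=> hy hy' h; apply: divle; rewrite ?ltr0n // -!natrM ler_nat //.
Qed.

Definition rr (R : realType) (u : nat -> nat) n k : R := (u n)%:R / (u k)%:R.

Lemma rr_ge0 R u n k : 0 <= rr R u n k.
Proof. by rewrite /rr divr_ge0. Qed.

Lemma rr_den R u (hu : a_sequence u) n k k' : (k <= k')%N -> rr R u n k' <= rr R u n k.
Proof.
move=> h; apply: divle_nat; rewrite ?u_pos //.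
by rewrite leq_mul2l u_le ?orbT.
Qed.

Lemma rr_num R u (hu : a_sequence u) n n' k : (n <= n')%N -> rr R u n k <= rr R u n' k.
Proof.
move=> h; apply: divle_nat; rewrite ?u_pos //.
by rewrite leq_mul2r u_le ?orbT.
Qed.

Lemma rr_Q R u (hu : a_sequence u) s : rr R u s s.+1 = (a_ratio u s.+1)%:R^-1.
Proof.
rewrite /rr u_ratio // natrM invfM mulrCA divff ?mulr1 //.
by rewrite pnatr_eq0 -lt0n u_pos.
Qed.

Lemma rr_pow2 R u (hu : a_sequence u) n d : rr R u n (n + d) <= (2 ^ d)%:R^-1.
Proof.
have := @divle_nat R (u n) (u (n + d)) 1 (2 ^ d); rewrite mulr1n mul1r; apply;
  [exact: u_pos|by rewrite expn_gt0|].
by rewrite mul1n mulnC u_pow2.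
Qed.

Lemma rr_powB R u B (hu : a_sequence u) (hB : forall n, (a_ratio u n <= B)%N) n d :
  (0 < B)%N -> (B ^ d)%:R^-1 <= rr R u n (n + d).
Proof.
move=> hB0; have := @divle_nat R 1 (B ^ d) (u n) (u (n + d)); rewrite mulr1n mul1r; apply;
  [by rewrite expn_gt0 hB0|exact: u_pos|].
by rewrite mul1n mulnC u_powB.
Qed.

Lemma rr_half R u (hu : a_sequence u) n k k' : (k < k')%N -> rr R u n k' <= rr R u n k / 2.
Proof.
move=> h; rewrite /rr -mulrA -invfM -natrM; apply: divle_nat; [exact: u_pos|by rewrite muln_gt0 u_pos|].
by rewrite leq_mul2l mulnC u_double ?orbT.
Qed.

Definition sseq (p : nat -> nat) (b : nat -> bool) j := p (2 * j + b j)%N.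
Definition aseq (R : realType) u p b j : R := (u (sseq p b j))%:R^-1.
Definition xval (R : realType) u p b : R := altlim (aseq R u p b).

Lemma p_lt (p : nat -> nat) : (forall k, (p k < p k.+1)%N) -> forall i j, (i < j)%N -> (p i < p j)%N.
Proof.
move=> hp i j hij; have := @smono p hp i j (ltnW hij).
have : (0 < j - i)%N by rewrite subn_gt0.
lia.
Qed.

Lemma s_lt p b : (forall k, (p k < p k.+1)%N) -> forall i j, (i < j)%N -> (sseq p b i < sseq p b j)%N.
Proof.
move=> hp i j hij; rewrite /sseq; apply: (@p_lt p hp); case: (b i); case: (b j); rewrite /= ?addn0 ?addn1; lia.
Qed.

Lemma s_ge p b : (forall k, (p k < p k.+1)%N) -> forall j, (j <= sseq p b j)%N.
Proof.
move=> hp; elim=> [|j IH] //; apply: leq_ltn_trans IH _; exact: s_lt.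
Qed.

Lemma inv_le (R : realType) (m n : nat) : (0 < m)%N -> (m <= n)%N -> (n%:R^-1 : R) <= m%:R^-1.
Proof.
move=> hm hmn; rewrite lef_pV2 ?posrE ?ltr0n ?ler_nat //; exact: leq_trans hmn.
Qed.

Lemma a_ge0 R u p b j : 0 <= aseq R u p b j.
Proof. by rewrite /aseq invr_ge0. Qed.

Lemma a_dec R u p b (hu : a_sequence u) (hp : forall k, (p k < p k.+1)%N) j :
  aseq R u p b j.+1 <= aseq R u p b j.
Proof.
apply: inv_le; first exact: u_pos.
by apply: u_le => //; apply: ltnW; apply: s_lt.
Qed.

Lemma exists_j0 p b : (forall k, (p k < p k.+1)%N) -> forall n,
  exists j0, (n < sseq p b j0)%N /\ forall i, (i < j0)%N -> (sseq p b i <= n)%N.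
Proof.
move=> hp n.
have ex : exists j, (n < sseq p b j)%N by exists n.+1; exact: s_ge.
case: (ex_minnP ex) => j0 h1 h2; exists j0; split => // i hi.
by rewrite leqNgt; apply/negP => /h2; rewrite leqNgt hi.
Qed.

Lemma key R u p b (hu : a_sequence u) (hp : forall k, (p k < p k.+1)%N) n j0 :
  (n < sseq p b j0)%N -> (forall i, (i < j0)%N -> (sseq p b i <= n)%N) ->
  exists z : int,
   rr R u n (sseq p b j0) - rr R u n (sseq p b j0.+1) <=
     (-1) ^+ j0 * ((u n)%:R * xval R u p b - z%:~R) <=
   rr R u n (sseq p b j0) - rr R u n (sseq p b j0.+1) + rr R u n (sseq p b j0.+2).
Proof.
move=> hn hi.
set a := aseq R u p b.
have [z hz] : exists z : int, alt (fun i => (u n)%:R * a i) j0 = z%:~R.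
  apply: alt_int => i ilt; exists (u n %/ u (sseq p b i))%N.
  rewrite -pmulrn natr_div ?unitfE ?pnatr_eq0 -?lt0n ?u_pos //; last by apply: u_dvd => //; apply: hi.
exists z.
have /andP[h1 h2] := altlim_bracket (a_ge0 R u p b) (a_dec R u p b hu hp) j0.
have hun : 0 <= (u n)%:R :> R by [].
have e : (u n)%:R * ((-1) ^+ j0 * (altlim a - alt a j0)) =
   (-1) ^+ j0 * ((u n)%:R * xval R u p b - z%:~R).
  by rewrite -hz -alt_scale /xval -/a; ring.
rewrite -e /rr; apply/andP; split.
- have := ler_wpM2l hun h1; rewrite /a /aseq; lra.
- have := ler_wpM2l hun h2; rewrite /a /aseq; lra.
Qed.

Lemma s_ge2 p b (hp : forall k, (p k < p k.+1)%N) (hp0 : (2 <= p 0%N)%N) j :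
  (2 <= sseq p b j)%N.
Proof. rewrite /sseq; apply: leq_trans hp0 _; have := @smono p hp 0%N (2 * j + b j)%N isT; lia. Qed.

Lemma c0_le R u p b Q (hu : a_sequence u) (hp : forall k, (p k < p k.+1)%N)
  (hpQ : forall i, a_ratio u (p i) = Q) n j0 :
  (n < sseq p b j0)%N -> rr R u n (sseq p b j0) <= Q%:R^-1.
Proof.
move=> hn; have hQ := hpQ (2 * j0 + b j0)%N; rewrite -/(sseq p b j0) in hQ.
move: hn hQ; case e: (sseq p b j0) => [|t] // hn hQ.
rewrite -div1r -[1]mulr1n; apply: divle_nat; first exact: u_pos.
  by rewrite lt0n; apply/eqP => Q0; move: (u_ratio hu t); rewrite hQ Q0 mul0n => h; have := u_pos hu t.+1; rewrite h.
rewrite mul1n u_ratio // hQ [(Q * _)%N]mulnC leq_mul2r u_le ?orbT //.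
Qed.

Lemma c0_le2 R u p b Q (hu : a_sequence u) (hp : forall k, (p k < p k.+1)%N)
  (hpQ : forall i, a_ratio u (p i) = Q) (hQ : (1 <= Q)%N) n j0 :
  (n.+1 < sseq p b j0)%N -> rr R u n (sseq p b j0) <= (2 * Q)%:R^-1.
Proof.
move=> hn; have hQ' := hpQ (2 * j0 + b j0)%N; rewrite -/(sseq p b j0) in hQ'.
move: hn hQ'; case e: (sseq p b j0) => [|[|t]] // hn hQ'.
rewrite -div1r -[1]mulr1n; apply: divle_nat; first exact: u_pos.
  by rewrite muln_gt0 hQ.
rewrite mul1n (u_ratio hu t.+1) hQ'.
have h1 := u_double hu t t.+1 (ltnSn t); have h2 : (u n <= u t)%N by apply: (u_le hu); lia.
nia.
Qed.

Lemma main_n R u p b Q (hu : a_sequence u) (hp : forall k, (p k < p k.+1)%N)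
  (hpQ : forall i, a_ratio u (p i) = Q) (hQ : (2 <= Q)%N) n j0 :
  (n < sseq p b j0)%N -> (forall i, (i < j0)%N -> (sseq p b i <= n)%N) ->
  rr R u n (sseq p b j0) - rr R u n (sseq p b j0.+1) <= dnorm ((u n)%:R * xval R u p b) <=
   rr R u n (sseq p b j0) - rr R u n (sseq p b j0.+1) + rr R u n (sseq p b j0.+2).
Proof.
move=> hn hi; have [z /andP[h1 h2]] := @key R u p b hu hp n j0 hn hi.
have c01 : rr R u n (sseq p b j0.+1) <= rr R u n (sseq p b j0).
  by apply: rr_den => //; apply: ltnW; apply: s_lt.
have c12 : rr R u n (sseq p b j0.+2) <= rr R u n (sseq p b j0.+1).
  by apply: rr_den => //; apply: ltnW; apply: s_lt.
have c0 := @c0_le R u p b Q hu hp hpQ n j0 hn.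
have hQ2 : (Q%:R^-1 : R) <= 2^-1 by apply: inv_le.
have eT : `|(u n)%:R * xval R u p b - z%:~R| = (-1) ^+ j0 * ((u n)%:R * xval R u p b - z%:~R).
  rewrite -(normrMsign j0) ger0_norm //; lra.
have d1 := @dnorm_le R ((u n)%:R * xval R u p b) z.
have d2 := @dnorm_ge R ((u n)%:R * xval R u p b) z.
rewrite eT in d1 d2.
have := d2 ltac:(lra); move=> d3.
apply/andP; split; lra.
Qed.

Lemma X_bounds R u p b Q (hu : a_sequence u) (hp : forall k, (p k < p k.+1)%N)
  (hpQ : forall i, a_ratio u (p i) = Q) (hp0 : (2 <= p 0%N)%N) :
  0 <= xval R u p b <= (2 * Q)%:R^-1.
Proof.
have /andP[h1 h2] := altlim_bracket (a_ge0 R u p b) (a_dec R u p b hu hp) 0%N.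
rewrite expr0 mul1r /= subr0 in h1 h2.
have a01 := a_dec R u p b hu hp 0%N.
have a12 := a_dec R u p b hu hp 1%N.
have a0 : aseq R u p b 0%N <= (2 * Q)%:R^-1.
  rewrite /aseq; have hs := @s_ge2 p b hp hp0 0%N.
  have hQ' := hpQ (2 * 0 + b 0%N)%N; rewrite -/(sseq p b 0%N) in hQ'.
  move: hs hQ'; case: (sseq p b 0%N) => [|[|t]] // _ hQ'.
  have hQ : (0 < Q)%N.
    by rewrite -hQ' /= divn_gt0 ?u_pos // ltnW // (u_lt hu).
  apply: inv_le; first by rewrite muln_gt0 hQ.
  rewrite (u_ratio hu t.+1) hQ'.
  have h3 := u_double hu t t.+1 (ltnSn t); have h4 := u_pos hu t; nia.
rewrite /xval; apply/andP; split; lra.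
Qed.

Lemma dnormX R u p b Q (hu : a_sequence u) (hp : forall k, (p k < p k.+1)%N)
  (hpQ : forall i, a_ratio u (p i) = Q) (hp0 : (2 <= p 0%N)%N) :
  dnorm (xval R u p b) <= (2 * Q)%:R^-1.
Proof.
have /andP[h1 h2] := @X_bounds R u p b Q hu hp hpQ hp0.
have := @dnorm_le R (xval R u p b) 0; rewrite mulr0z subr0 ger0_norm //; lra.
Qed.

Lemma partB R u p b Q B G (hu : a_sequence u) (hp : forall k, (p k < p k.+1)%N)
  (hpQ : forall i, a_ratio u (p i) = Q) (hp0 : (2 <= p 0%N)%N) (hQ : (2 <= Q)%N)
  (hB : forall n, (a_ratio u n <= B)%N)
  (hgap : forall j, (sseq p b j.+1 <= sseq p b j + G)%N) :
  rho0 u (xval R u p b) < Q%:R^-1.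
Proof.
have hB1 : (0 < B)%N by have := hB (p 0%N); rewrite hpQ; lia.
set K : R := (B ^ G.+1)%:R^-1.
have K0 : 0 < K by rewrite invr_gt0 ltr0n expn_gt0 hB1.
have Q0 : 0 < (Q%:R^-1 : R) by rewrite invr_gt0 ltr0n; lia.
set del := Num.min (Q%:R^-1 / 2) (K / 2).
have d1 : del <= Q%:R^-1 / 2 by rewrite ge_min lexx.
have d2 : del <= K / 2 by rewrite ge_min lexx orbT.
have d0 : 0 < del by rewrite lt_min; apply/andP; split; lra.
have e2 : (2 * Q)%:R^-1 = Q%:R^-1 / 2 :> R by rewrite natrM invfM mulrC.
have hn : forall n, dnorm ((u n)%:R * xval R u p b) <= Q%:R^-1 - del.
  move=> n; have [j0 [hn hi]] := @exists_j0 p b hp n.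
  have /andP[_ m2] := @main_n R u p b Q hu hp hpQ hQ n j0 hn hi.
  have c12 : rr R u n (sseq p b j0.+2) <= rr R u n (sseq p b j0.+1).
    by apply: rr_den => //; apply: ltnW; apply: s_lt.
  have [lt|eq] : (n.+1 < sseq p b j0)%N \/ n.+1 = sseq p b j0 by lia.
  - have := @c0_le2 R u p b Q hu hp hpQ (ltnW hQ) n j0 lt; rewrite e2; lra.
  - have c0 := @c0_le R u p b Q hu hp hpQ n j0 hn.
    have ch : rr R u n (sseq p b j0.+2) <= rr R u n (sseq p b j0.+1) / 2.
      by apply: rr_half => //; apply: s_lt.
    have c1 : K <= rr R u n (sseq p b j0.+1).
      have hd : sseq p b j0.+1 = (n + (sseq p b j0.+1 - n))%N.
        by have := @s_lt p b hp j0 j0.+1 (ltnSn _); lia.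
      rewrite hd; apply: le_trans (@rr_powB R u B hu hB n _ hB1).
      apply: inv_le; first by rewrite expn_gt0 hB1.
      apply: leq_pexp2l => //; have := hgap j0; lia.
    lra.
have hX := @dnormX R u p b Q hu hp hpQ hp0; rewrite e2 in hX.
apply: (@le_lt_trans _ _ (Q%:R^-1 - del)); last lra.
apply: ge_sup; first by exists (Num.max (dnorm (xval R u p b)) (dnorm ((u 0%N)%:R * xval R u p b))); exists 0%N.
move=> y [n _ <-]; rewrite ge_max; apply/andP; split; last exact: hn.
lra.
Qed.

Lemma partA R u p b Q (hu : a_sequence u) (hp : forall k, (p k < p k.+1)%N)
  (hpQ : forall i, a_ratio u (p i) = Q) (hp0 : (2 <= p 0%N)%N) (hQ : (2 <= Q)%N)
  (hgap : forall j, (j.+1 + sseq p b j <= sseq p b j.+1)%N) :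
  rho0 u (xval R u p b) = Q%:R^-1.
Proof.
have Q0 : 0 < (Q%:R^-1 : R) by rewrite invr_gt0 ltr0n; lia.
have e2 : (2 * Q)%:R^-1 = Q%:R^-1 / 2 :> R by rewrite natrM invfM mulrC.
have hX := @dnormX R u p b Q hu hp hpQ hp0; rewrite e2 in hX.
have hn : forall n, dnorm ((u n)%:R * xval R u p b) <= Q%:R^-1.
  move=> n; have [j0 [hn hi]] := @exists_j0 p b hp n.
  have /andP[_ m2] := @main_n R u p b Q hu hp hpQ hQ n j0 hn hi.
  have c12 : rr R u n (sseq p b j0.+2) <= rr R u n (sseq p b j0.+1).
    by apply: rr_den => //; apply: ltnW; apply: s_lt.
  have := @c0_le R u p b Q hu hp hpQ n j0 hn; lra.
set E := [set Num.max (dnorm (xval R u p b)) (dnorm ((u n)%:R * xval R u p b)) | n in [set: nat]].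
have ub : ubound E (Q%:R^-1).
  move=> y [n _ <-]; rewrite ge_max; apply/andP; split; last exact: hn; lra.
have up : rho0 u (xval R u p b) <= Q%:R^-1.
  by apply: ge_sup => //; exists (Num.max (dnorm (xval R u p b)) (dnorm ((u 0%N)%:R * xval R u p b))); exists 0%N.
have low : forall j, Q%:R^-1 - (j.+1%:R)^-1 <= rho0 u (xval R u p b).
  move=> j.
  have hs := @s_ge2 p b hp hp0 j.
  have hQ' := hpQ (2 * j + b j)%N; rewrite -/(sseq p b j) in hQ'.
  have hi : forall i, (i < j)%N -> (sseq p b i <= (sseq p b j).-1)%N.
    by move=> i hij; have := @s_lt p b hp i j hij; lia.
  have hn1 : ((sseq p b j).-1 < sseq p b j)%N by lia.
  have /andP[m1 _] := @main_n R u p b Q hu hp hpQ hQ _ j hn1 hi.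
  have c0 : rr R u (sseq p b j).-1 (sseq p b j) = Q%:R^-1.
    have [t et] : exists t, sseq p b j = t.+1 by exists (sseq p b j).-1; lia.
    by rewrite et /= rr_Q // -et hQ'.
  have c1 : rr R u (sseq p b j).-1 (sseq p b j.+1) <= (j.+1%:R)^-1.
    have hd : sseq p b j.+1 = ((sseq p b j).-1 + (sseq p b j.+1 - (sseq p b j).-1))%N.
      by have := hgap j; lia.
    rewrite hd; apply: le_trans (@rr_pow2 R u hu _ _) _.
    apply: inv_le => //; apply: leq_trans (ltnW (ltn_expl _ (isT : (1 < 2)%N))).
    have := hgap j; lia.
  apply: le_trans (_ : Num.max (dnorm (xval R u p b)) (dnorm ((u (sseq p b j).-1)%:R * xval R u p b)) <= _).
    rewrite le_max; apply/orP; right; rewrite c0 in m1; apply: le_trans m1; rewrite lerD2l lerN2 //.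
  apply: ub_le_sup; last by exists (sseq p b j).-1.
  by exists (Q%:R^-1).
apply/eqP; rewrite eq_le up /=.
rewrite leNgt; apply/negP => lt.
set eps := Q%:R^-1 - rho0 u (xval R u p b).
have eps0 : 0 < eps by rewrite /eps; lra.
set j := Num.truncn (eps^-1).
have hj : eps^-1 < j.+1%:R by apply: truncnS_gt.
have : (j.+1%:R)^-1 < eps.
  by rewrite -[eps]invrK ltf_pV2 ?posrE ?invr_gt0 ?ltr0n.
move=> hx; have := low j; rewrite /eps in hx.
move=> hl; have : Q%:R^-1 - eps < rho0 u (xval R u p b).
  by apply: lt_le_trans hl; rewrite ltrD2l ltrN2.
rewrite /eps; lra.
Qed.

Lemma inv_lt (R : realType) (m n : nat) : (0 < m)%N -> (m < n)%N -> (n%:R^-1 : R) < m%:R^-1.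
Proof.
move=> hm hmn; rewrite ltf_pV2 ?posrE ?ltr0n ?ltr_nat //; exact: ltn_trans hmn.
Qed.

Lemma sep R u p b b' j (hu : a_sequence u) (hp : forall k, (p k < p k.+1)%N) :
  (forall i, (i < j)%N -> b i = b' i) -> b j = false -> b' j = true ->
  xval R u p b <> xval R u p b'.
Proof.
move=> hi bj bj' e.
have eA : alt (aseq R u p b) j = alt (aseq R u p b') j.
  by apply: alt_ext => i /hi; rewrite /aseq /sseq => ->.
have /andP[h1 _] := altlim_bracket (a_ge0 R u p b) (a_dec R u p b hu hp) j.
have /andP[_ h2] := altlim_bracket (a_ge0 R u p b') (a_dec R u p b' hu hp) j.
have a12 := a_dec R u p b' hu hp j.+1.
have a01 := a_dec R u p b' hu hp j.
rewrite /xval in e; rewrite e eA in h1.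
have hlt : aseq R u p b' j < aseq R u p b j - aseq R u p b j.+1.
  rewrite /aseq /sseq bj bj' /= addn0 addn1.
  have hs : (p (2 * j).+1 < p (2 * j.+1 + b j.+1))%N.
    by apply: (@p_lt p hp); case: (b j.+1); rewrite /= ?addn0 ?addn1; lia.
  have l1 := @inv_lt R _ _ (u_pos hu _) (u_lt hu _ _ hs).
  have l2 : (u (p (2 * j).+1))%:R^-1 <= (u (p (2 * j)))%:R^-1 / 2 :> R.
    rewrite -invfM -natrM; apply: inv_le; first by rewrite muln_gt0 u_pos.
    by rewrite mulnC; apply: u_double => //; apply: (@p_lt p hp).
  lra.
have [s|s] : (-1) ^+ j = 1 :> R \/ (-1) ^+ j = -1 :> R.
  by rewrite -signr_odd; case: (odd j); [right; rewrite expr1|left; rewrite expr0].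
all: rewrite s in h1 h2; lra.
Qed.

Lemma xinj R u p (hu : a_sequence u) (hp : forall k, (p k < p k.+1)%N) :
  injective (fun b : nat -> bool => xval R u p b).
Proof.
move=> b b' /= e; apply: funext => k; apply/eqP; apply: contraT => ne.
have ex : exists j, b j != b' j by exists k.
case: (ex_minnP ex) => j hj hmin.
have hi : forall i, (i < j)%N -> b i = b' i.
  move=> i hij; apply/eqP; apply: contraT => hne.
  by have := hmin i hne; rewrite leqNgt hij.
move: hj; case bj: (b j); case bj': (b' j) => // _.
- exfalso; exact: (@sep R u p b' b j hu hp (fun i h => esym (hi i h)) bj' bj (esym e)).
- exfalso; exact: (@sep R u p b b' j hu hp hi bj bj' e).
Qed.

Local Open Scope card_scope.

Lemma R_le_bits (R : realType) : [set: R] #<= [set: nat -> bool].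
Proof.
apply/pcard_injP.
exists (fun x : R => fun n => `[< exists q : rat, pickle q = n /\ ratr q < x >]).
move=> x y _ _ e.
have key : forall x y : R, x < y ->
   (fun n => `[< exists q : rat, pickle q = n /\ ratr q < x >]) <>
   (fun n => `[< exists q : rat, pickle q = n /\ ratr q < y >]).
  move=> a c ac h.
  have [q] := rat_in_itvoo ac; rewrite in_itv /= => /andP[q1 q2].
  have := congr1 (fun f => f (pickle q)) h => /=.
  have -> : `[< exists q0 : rat, pickle q0 = pickle q /\ ratr q0 < c >] = true.
    by apply/asboolP; exists q.
  move/asboolP => [q' [/(pcan_inj pickleK) -> hq]].
  by have := lt_trans hq q1; rewrite ltxx.
have [xy|yx|//] := ltgtP x y.
- by have := key _ _ xy; rewrite e.
- by have := key _ _ yx; rewrite e.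
Qed.

Lemma card_from_bits (R : realType) (A : set R) (f : (nat -> bool) -> R) :
  injective f -> (forall b, A (f b)) -> A #= [set: R].
Proof.
move=> fi fA; apply: Cantor_Bernstein; first exact: card_leT.
apply: card_le_trans (R_le_bits R) _.
have h : f @` [set: nat -> bool] #= [set: nat -> bool] by apply: inj_card_eq => x y _ _; exact: fi.
have [_ h2] := (card_eqPle _ _).1 h.
apply: card_le_trans h2 _; apply: subset_card_le => _ [b _ <-]; exact: fA.
Qed.

Theorem propositionC (R : realType) (u : nat -> nat) (hu : a_sequence u)
  (hbnd : exists B : nat, forall n : nat, (a_ratio u n <= B)%N)
  (m : nat -> nat) (hm_incr : forall k : nat, (m k < m k.+1)%N)
  (hm_enum : range m = Sstar R u) :
  ((~ exists D : nat, forall k : nat, (m k.+1 - m k <= D)%N) ->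
     [set x : R | torus x /\ rho0 u x = (qlim R u)^-1] #= [set: R]) /\
  ((exists D : nat, forall k : nat, (m k.+1 - m k <= D)%N) ->
     [set x : R | torus x /\ rho0 u x < (qlim R u)^-1] #= [set: R]).
Proof.
set Q := a_ratio u (m 0%N).
have hmS : forall k, Sstar R u (m k) by move=> k; rewrite -hm_enum; exists k.
have hqlim : qlim R u = Q%:R by have := hmS 0%N; rewrite /Sstar /= => <-.
have hmQ : forall k, a_ratio u (m k) = Q.
  by move=> k; have := hmS k; rewrite /Sstar /= hqlim => /eqP; rewrite eqr_nat => /eqP.
have hQ : (2 <= Q)%N.
  rewrite -(hmQ 1%N).
  have [t et] : exists t, m 1%N = t.+1 by exists (m 1%N).-1; have := hm_incr 0%N; lia.
  rewrite et; have e := u_ratio hu t; have h1 := u_double hu t t.+1 (ltnSn t).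
  have h2 := u_pos hu t; nia.
have hm2 : (2 <= m 2%N)%N by have := @smono m hm_incr 0%N 2%N isT; lia.
have hQ0 : (0 < (Q%:R : R)) by rewrite ltr0n; lia.
have torusX : forall p b, (forall k, (p k < p k.+1)%N) -> (forall i, a_ratio u (p i) = Q) ->
    (2 <= p 0%N)%N -> torus (xval R u p b).
  move=> p b hp hpQ hp0; have /andP[h1 h2] := @X_bounds R u p b Q hu hp hpQ hp0.
  rewrite /torus /=; apply/andP; split => //; apply: le_lt_trans h2 _.
  by rewrite invf_lt1 ?ltr0n ?ltr1n ?muln_gt0; lia.
rewrite hqlim; split.
- move=> _.
  set p := fun i => m (i * i + 2)%N.
  have hp : forall k, (p k < p k.+1)%N by move=> k; apply: (@p_lt m hm_incr); nia.
  have hpQ : forall i, a_ratio u (p i) = Q by move=> i; apply: hmQ.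
  have hp0 : (2 <= p 0%N)%N by exact: hm2.
  apply: (@card_from_bits R _ (fun b => xval R u p b)); first exact: xinj.
  move=> b; split; first exact: torusX.
  apply: (@partA R u p b Q hu hp hpQ hp0 hQ) => j.
  rewrite /sseq /p.
  have b1 := leq_b1 (b j); have b2 := leq_b1 (b j.+1).
  have hxy : ((2 * j + b j) * (2 * j + b j) + 2 <= (2 * j.+1 + b j.+1) * (2 * j.+1 + b j.+1) + 2)%N by nia.
  have := @smono m hm_incr _ _ hxy; nia.
- move=> [D hD].
  have [B hB] := hbnd.
  set p := fun i => m (i + 2)%N.
  have hp : forall k, (p k < p k.+1)%N by move=> k; apply: (@p_lt m hm_incr); lia.
  have hpQ : forall i, a_ratio u (p i) = Q by move=> i; apply: hmQ.
  have hp0 : (2 <= p 0%N)%N by exact: hm2.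
  have mb : forall k d, (m (k + d) <= m k + d * D)%N.
    move=> k; elim=> [|d IH]; first by rewrite addn0 mul0n addn0.
    by have := hD (k + d)%N; rewrite addnS; lia.
  have mmono : forall a c, (a <= c)%N -> (m a <= m c)%N.
    by move=> a c ac; have := @smono m hm_incr a c ac; lia.
  apply: (@card_from_bits R _ (fun b => xval R u p b)); first exact: xinj.
  move=> b; split; first exact: torusX.
  apply: (@partB R u p b Q B (3 * D) hu hp hpQ hp0 hQ hB) => j.
  rewrite /sseq /p.
  have h1 : (m (2 * j + b j + 2) >= m (2 * j + 2))%N by apply: mmono; lia.
  have h2 : (m (2 * j.+1 + b j.+1 + 2) <= m (2 * j + 2 + 3))%N.
    by apply: mmono; have := leq_b1 (b j.+1); lia.
  have := mb (2 * j + 2)%N 3%N; lia.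
Qed.
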